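(* Let $a,b,n$ be positive integers with $b\ge a$ and $n\ge 3b(b+1)/a+3b+7$. Let $k=\left\lceil\frac{2b^2+2b}{a}\right\rceil+2b-4$. Then $$\rho\big(K_{k}\nabla(K_2\cup K_{n-k-2})\big)<n-2\quad\text{and}\quad \rho\big(K_{4b}\nabla(K_2\cup K_{n-4b-2})\big)<n-2.$$
   Context: $\rho(G)$ denotes the spectral radius (largest eigenvalue of the adjacency matrix) of a graph $G$. For graphs $G_1,G_2$, the join $G_1\nabla G_2$ is obtained from the disjoint union $G_1\cup G_2$ by adding all edges between $V(G_1)$ and $V(G_2)$; $K_m$ is the complete graph on $m$ vertices. *)

(* Defs.v *)
From HB Require Import structures.
From mathcomp Require Import all_boot all_order all_algebra.
From mathcomp Require Import classical_sets boolp reals.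
Set Implicit Arguments. Unset Strict Implicit. Unset Printing Implicit Defensive.
Import Order.TTheory GRing.Theory Num.Theory.
Local Open Scope ring_scope.
Local Open Scope classical_set_scope.

(* A simple graph is given by a vertex finType T and an adjacency relation
   e : rel T (symmetric, irreflexive for all graphs built below). *)

Definition complete_graph (m : nat) : rel 'I_m := fun i j => i != j.

Arguments complete_graph m : clear implicits.

Definition graph_union (T U : finType) (e : rel T) (f : rel U) : rel (T + U)%type :=
  fun x y => match x, y with
             | inl a, inl b => e a b
             | inr a, inr b => f a b
             | _, _ => false
             end.

Definition graph_join (T U : finType) (e : rel T) (f : rel U) : rel (T + U)%type :=
  fun x y => match x, y with
             | inl a, inl b => e a b
             | inr a, inr b => f a b
             | _, _ => true
             end.

Definition adj_mx (R : realType) (T : finType) (e : rel T) : 'M[R]_#|T| :=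
  \matrix_(i, j) (e (enum_val i) (enum_val j))%:R.

Definition spec_rad (R : realType) (T : finType) (e : rel T) : R :=
  sup [set l : R | eigenvalue (adj_mx R e) l].

(* Main.v *)
Require Import Defs.
From HB Require Import structures.
From mathcomp Require Import all_boot all_order all_algebra.
From mathcomp Require Import classical_sets boolp reals.
From mathcomp Require Import ring lra zify.
Import Order.TTheory GRing.Theory Num.Theory.
Local Open Scope ring_scope.

Lemma arith (R : realType) (K M L : R) : 0 <= K -> 0 <= M ->
  2 * K * (K + 1) < (K + M - 1) * (K + M + 1) ->
  K + M <= L ->
  (L + 1) * (L - 1) * (L + 1 - M) =
    K * ((L - 1) * (L + 1 - M) + 2 * (L + 1 - M) + M * (L - 1)) -> False.
Proof.
move=> hK hM hc hL heq.
set P := L - 1. set Q := L + 1 - M.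
have hP : K + M - 1 <= P by rewrite /P; lra.
have hQ : K + 1 <= Q by rewrite /Q; lra.
have hP0 : 0 < P.
  have : 0 < (K + M - 1) * (K + M + 1) by nra.
  move=> h; apply: (lt_le_trans _ hP).
  rewrite pmulr_lgt0 in h => //; lra.
have e2 : P * (Q - K) * (Q + M) = 2 * K * Q.
  move/eqP: heq; rewrite -subr_eq0 => /eqP h.
  apply/eqP; rewrite -subr_eq0; apply/eqP; rewrite -h /P /Q; ring.
have h1 : Q <= (Q - K) * (K + 1) by nra.
have h2 : (K + M - 1) * (K + M + 1) <= P * (Q + M).
  apply: ler_pM => //; try lra.
  have : 0 < (K + M - 1) * (K + M + 1) by nra.
  rewrite pmulr_lgt0; lra.
have hPQM : 0 <= P * (Q + M) by nra.
have h3 : P * (Q + M) * Q <= P * (Q - K) * (Q + M) * (K + 1).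
  have -> : P * (Q - K) * (Q + M) * (K + 1) = P * (Q + M) * ((Q - K) * (K + 1)) by ring.
  by apply: ler_wpM2l.
have h4 : 2 * K * (K + 1) * Q < P * (Q + M) * Q.
  rewrite ltr_pM2r; last lra. lra.
rewrite e2 in h3. nra.
Qed.

Lemma sum_neq (R : realType) (m : nat) (f : 'I_m -> R) j :
  \sum_i f i * (complete_graph m i j)%:R = \sum_i f i - f j.
Proof.
rewrite (bigD1 j) //= [in RHS](bigD1 j) //= /complete_graph eqxx mulr0 add0r.
rewrite addrC addrK; apply: eq_bigr => i hi; by rewrite hi mulr1.
Qed.

Lemma sum1 (R : realType) (n : nat) (f : 'I_n -> R) : \sum_i f i * 1 = \sum_i f i.
Proof. by apply: eq_bigr => i _; rewrite mulr1. Qed.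

Lemma sum0' (R : realType) (n : nat) (f : 'I_n -> R) : \sum_i f i * 0 = 0.
Proof. by apply: big1 => i _; rewrite mulr0. Qed.

Lemma mul_pos0 (R : realType) (c y : R) : 0 < c -> c * y = 0 -> y = 0.
Proof. by move=> hc /eqP; rewrite mulf_eq0 gt_eqF // => /eqP. Qed.

Section E.
Variables (R : realType) (k m : nat).
Let G := graph_join (complete_graph k) (graph_union (complete_graph 2) (complete_graph m)).
Local Notation T := (('I_k + ('I_2 + 'I_m))%type : finType).

Lemma eig_eq (l : R) (v : 'rV[R]_#|T|) : v *m adj_mx R G = l *: v ->
  forall t : T, l * v 0 (enum_rank t) = \sum_(s : T) v 0 (enum_rank s) * (G s t)%:R.
Proof.
move=> hv t.
move/matrixP/(_ 0 (enum_rank t)): hv; rewrite !mxE => <-.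
rewrite (big_enum_val (A := T)) /=.
apply: eq_bigr => i _; rewrite mxE enum_valK enum_rankK //.
Qed.

Lemma key (l : R) :
  2 * (k%:R : R) * (k%:R + 1) < (k%:R + m%:R - 1) * (k%:R + m%:R + 1) ->
  eigenvalue (adj_mx R G) l -> l < k%:R + m%:R.
Proof.
move=> hc /eigenvalueP [v hv vn0].
rewrite ltNge; apply/negP => hl.
have he := @eig_eq l v hv.
set x := fun t : T => v 0 (enum_rank t).
set sA := \sum_(i : 'I_k) x (inl i).
set sB := \sum_(i : 'I_2) x (inr (inl i)).
set sC := \sum_(i : 'I_m) x (inr (inr i)).
have hsum : forall t : T, \sum_(s : T) x s * (G s t)%:R =
   \sum_(i : 'I_k) x (inl i) * (G (inl i) t)%:R
   + (\sum_(i : 'I_2) x (inr (inl i)) * (G (inr (inl i)) t)%:R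
   + \sum_(i : 'I_m) x (inr (inr i)) * (G (inr (inr i)) t)%:R).
  by move=> t; rewrite big_sumType /= big_sumType.
have hA : forall j, (l + 1) * x (inl j) = sA + sB + sC.
  move=> j; have := he (inl j); rewrite -/x hsum /G /graph_join /graph_union /=.
  rewrite sum_neq => h; rewrite mulrDl mul1r.
  change (l * x (inl j)) with (l * v 0 (enum_rank (inl j))).
  rewrite h !sum1 /sA /sB /sC; ring.
have hB : forall j, (l + 1) * x (inr (inl j)) = sA + sB.
  move=> j; have := he (inr (inl j)); rewrite -/x hsum /G /graph_join /graph_union /=.
  rewrite sum_neq => h; rewrite mulrDl mul1r.
  change (l * x (inr (inl j))) with (l * v 0 (enum_rank (inr (inl j)))).
  rewrite h !sum1 sum0' /sA /sB /sC; ring.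
have hC : forall j, (l + 1) * x (inr (inr j)) = sA + sC.
  move=> j; have := he (inr (inr j)); rewrite -/x hsum /G /graph_join /graph_union /=.
  rewrite sum_neq => h; rewrite mulrDl mul1r.
  change (l * x (inr (inr j))) with (l * v 0 (enum_rank (inr (inr j)))).
  rewrite h !sum1 sum0' /sA /sB /sC; ring.
have tA : (l + 1) * sA = k%:R * (sA + sB + sC).
  rewrite /sA mulr_sumr; under eq_bigr do rewrite hA.
  by rewrite sumr_const card_ord mulr_natl.
have tB : (l + 1) * sB = 2 * (sA + sB).
  rewrite /sB mulr_sumr; under eq_bigr do rewrite hB.
  by rewrite sumr_const card_ord mulr_natl.
have tC : (l + 1) * sC = m%:R * (sA + sC).
  rewrite /sC mulr_sumr; under eq_bigr do rewrite hC.
  by rewrite sumr_const card_ord mulr_natl.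
have hk0 : 0 <= (k%:R : R) by [].
have hm0 : 0 <= (m%:R : R) by [].
have hl1 : 0 < l + 1 by lra.
have hkm : 1 < (k%:R : R) + m%:R.
  rewrite ltNge; apply/negP => h1.
  have : (k%:R + m%:R - 1) * (k%:R + m%:R + 1) <= (0 : R).
    rewrite mulr_le0_ge0 //; lra.
  nra.
have e1 : (l + 1) * sA - k%:R * (sA + sB + sC) = 0 by rewrite tA subrr.
have e2 : (l - 1) * sB - 2 * sA = 0.
  have -> : (l - 1) * sB - 2 * sA = (l + 1) * sB - 2 * (sA + sB) by ring.
  by rewrite tB subrr.
have e3 : (l + 1 - m%:R) * sC - m%:R * sA = 0.
  have -> : (l + 1 - m%:R) * sC - m%:R * sA = (l + 1) * sC - m%:R * (sA + sC) by ring.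
  by rewrite tC subrr.
have [sA0|sAn0] := eqVneq sA 0.
  have sB0 : sB = 0.
    apply: (@mul_pos0 _ (l - 1)); first lra.
    by rewrite -e2 sA0 mulr0 subr0.
  have sC0 : sC = 0.
    apply: (@mul_pos0 _ (l + 1 - m%:R)); first lra.
    by rewrite -e3 sA0 mulr0 subr0.
  move/eqP: vn0; apply; apply/rowP => i; rewrite mxE.
  have -> : v 0 i = x (enum_val i) by rewrite /x enum_valK.
  case: (enum_val i) => [j|[j|j]].
  - by have := hA j; rewrite sA0 sB0 sC0 !addr0; exact: mul_pos0 hl1.
  - by have := hB j; rewrite sA0 sB0 !addr0; exact: mul_pos0 hl1.
  - by have := hC j; rewrite sA0 sC0 !addr0; exact: mul_pos0 hl1.
apply: (@arith R k%:R m%:R l) => //.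
apply/eqP; rewrite -subr_eq0; apply/eqP.
apply: (mulIf sAn0); rewrite mul0r.
have -> : ((l + 1) * (l - 1) * (l + 1 - m%:R) -
   k%:R * ((l - 1) * (l + 1 - m%:R) + 2 * (l + 1 - m%:R) + m%:R * (l - 1))) * sA
   = (l - 1) * (l + 1 - m%:R) * ((l + 1) * sA - k%:R * (sA + sB + sC))
     + k%:R * (l + 1 - m%:R) * ((l - 1) * sB - 2 * sA)
     + k%:R * (l - 1) * ((l + 1 - m%:R) * sC - m%:R * sA) by ring.
by rewrite e1 e2 e3 !mulr0 !addr0.

Qed.
End E.

Lemma poly_roots_fin (R : realType) (p : {poly R}) : p != 0 ->
  exists s : seq R, forall x, root p x -> x \in s.
Proof.
move: {2}(size p) (leqnn (size p)) => n; elim: n p => [|n IH] p hs p0.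
  by move: p0; rewrite -size_poly_eq0; case: (size p) hs.
have [[a ha]|na] := pselect (exists a, root p a); last first.
  by exists [::] => x hx; exfalso; apply: na; exists x.
have /factor_theorem [q hq] := ha.
have q0 : q != 0 by apply: contraNneq p0 => q0; rewrite hq q0 mul0r.
have hsq : (size q <= n)%N.
  have := hs; rewrite hq size_mul ?polyXsubC_eq0 // size_XsubC addn2 /=.
  by [].
have [s hsr] := IH q hsq q0.
exists (a :: s) => x; rewrite hq rootM root_XsubC in_cons => /orP [/hsr ->|->];
  by rewrite ?orbT.
Qed.

Lemma seq_bound (R : realType) (s : seq R) (M : R) :
  exists c, c < M /\ forall x, x \in s -> x < M -> x <= c.
Proof.
elim: s => [|y s [c [hc hs]]]; first by exists (M - 1); split => //; lra.
have [hy|hy] := ltP y M.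
  exists (Num.max c y); split; first by rewrite gt_max hc hy.
  move=> x; rewrite in_cons => /orP [/eqP ->|hx] hxM; first by rewrite le_max lexx orbT.
  by rewrite le_max hs.
exists c; split => // x; rewrite in_cons => /orP [/eqP ->|hx] hxM; last exact: hs.
by exfalso; lra.
Qed.

Section SB.
Local Open Scope classical_set_scope.
Lemma spec_bound (R : realType) (T : finType) (e : rel T) (M : R) :
  0 < M -> (forall l, eigenvalue (adj_mx R e) l -> l < M) -> spec_rad R e < M.
Proof.
move=> M0 hl; rewrite /spec_rad.
have [s hs] : exists s : seq R, forall x, eigenvalue (adj_mx R e) x -> x \in s.
  have [s hs] := @poly_roots_fin R _ (monic_neq0 (char_poly_monic (adj_mx R e))).
  by exists s => x; rewrite eigenvalue_root_char; apply: hs.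
have [c [cM hc]] := @seq_bound R s M.
have [ne|em] := pselect ([set l : R | eigenvalue (adj_mx R e) l] !=set0).
  apply: (le_lt_trans _ cM); apply: ge_sup => // x /= hx.
  by apply: hc; [apply: hs|apply: hl].
have -> : [set l : R | eigenvalue (adj_mx R e) l] = set0.
  by apply/seteqP; split => x // hx; apply: em; exists x.
by rewrite sup0.
Qed.
End SB.

Lemma gen (R : realType) (K n : nat) : (K + 2 <= n)%N ->
  2 * (K%:R : R) * (K%:R + 1) < (n%:R - 3) * (n%:R - 1) ->
  spec_rad R (graph_join (complete_graph K)
                (graph_union (complete_graph 2) (complete_graph (n - K - 2))))
    < n%:R - 2.
Proof.
move=> hKn hc.
have hn : (n%:R : R) = K%:R + (n - K - 2)%:R + 2.
  rewrite -!natrD; congr (_%:R); lia.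
set m := (n - K - 2)%N in hn *.
rewrite hn in hc *.
have hK0 : 0 <= (K%:R : R) by [].
have hm0 : 0 <= (m%:R : R) by [].
have hkm : 1 < (K%:R : R) + m%:R.
  rewrite ltNge; apply/negP => h1.
  have : (K%:R + m%:R + 2 - 3) * (K%:R + m%:R + 2 - 1) <= (0 : R).
    rewrite mulr_le0_ge0 //; lra.
  have : 0 <= (K%:R : R) by [].
  nra.
apply: spec_bound; first lra.
move=> l hl.
have := @key R K m l _ hl.
have -> : K%:R + m%:R + 2 - 2 = (K%:R + m%:R : R) by ring.
apply.
have -> : (K%:R + m%:R - 1 : R) = K%:R + m%:R + 2 - 3 by ring.
have -> : (K%:R + m%:R + 1 : R) = K%:R + m%:R + 2 - 1 by ring.
exact: hc.
Qed.

Theorem lemma2p3 (R : realType) (a b n k : nat)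
  (ha : (0 < a)%N) (hb : (0 < b)%N) (hn : (0 < n)%N) (hab : (a <= b)%N)
  (hbn : (3 * b * (b + 1))%:R / a%:R + (3 * b + 7)%:R <= (n%:R : R))
  (hk : (k%:Z : int) = Num.ceil (((2 * b ^ 2 + 2 * b)%:R : R) / a%:R)
                        + (2 * b)%:Z - 4) :
  spec_rad R (graph_join (complete_graph k)
                (graph_union (complete_graph 2) (complete_graph (n - k - 2))))
    < n%:R - 2
  /\
  spec_rad R (graph_join (complete_graph (4 * b))
                (graph_union (complete_graph 2) (complete_graph (n - 4 * b - 2))))
    < n%:R - 2.
Proof.
set A : R := a%:R. set B : R := b%:R.
have hA : 0 < A by rewrite /A ltr0n.
have hB : 1 <= B by rewrite /B ler1n.
have hAB : A <= B by rewrite /A /B ler_nat.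
set r : R := B * (B + 1) / A.
have hr : B + 1 <= r.
  rewrite /r ler_pdivlMr //.
  have : 0 <= (B - A) * (B + 1) by apply: mulr_ge0; lra.
  lra.
have e1 : (3 * b * (b + 1))%:R / a%:R = 3 * r.
  rewrite /r /A /B !natrM natrD; ring.
have e2 : ((2 * b ^ 2 + 2 * b)%:R : R) / a%:R = 2 * r.
  rewrite /r /A /B natrD !natrM ?natrX; ring.
rewrite e1 natrD natrM -/B in hbn.
set N : R := n%:R in hbn *.
have hkr : (k%:R : R) - 2 * B + 3 < 2 * r.
  rewrite -e2.
  have := ceilB1_lt (((2 * b ^ 2 + 2 * b)%:R : R) / a%:R).
  have -> : Num.ceil (((2 * b ^ 2 + 2 * b)%:R : R) / a%:R) = k%:Z - (2 * b)%:Z + 4.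
    rewrite hk; ring.
  apply: le_lt_trans; rewrite !intrD !intrN.
  have hz : forall j : nat, ((j%:Z)%:~R : R) = j%:R by [].
  rewrite !hz /B natrM; lra.
have hK0 : 0 <= (k%:R : R) by [].
split.
  apply: gen.
    rewrite -(ler_nat R) natrD -/N; lra.
  nra.
apply: gen.
  rewrite -(ler_nat R) natrD natrM -/N -/B; lra.
rewrite natrM -/B; nra.
Qed.
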